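(* Let $q$ be a power of $2$, $k\ge1$, and let $T=\{x\in\mathbb{F}_{q^{3k}}:\mathrm{Tr}_{q^{3k}/q^k}(x)=0\}$. Then for every $c\in\mathbb{F}_{q^{3k}}\setminus\mathbb{F}_{q^k}$, \[ \sum_{x\in T}(-1)^{\mathrm{Tr}_{q^{3k}/2}\left(c\,x^{1+2q^k+q^{2k}}\right)}=0. \]
   Context: $\mathbb{F}_m$ denotes the finite field with $m$ elements. $\mathrm{Tr}_{q^{3k}/q^k}(x)=x+x^{q^k}+x^{q^{2k}}$ is the relative trace to the subfield $\mathbb{F}_{q^k}$, and $\mathrm{Tr}_{q^{3k}/2}$ is the absolute trace from $\mathbb{F}_{q^{3k}}$ to $\mathbb{F}_2$. *)

(* Defs.v *)
From HB Require Import structures.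
From mathcomp Require Import all_boot all_order all_algebra all_field.
Set Implicit Arguments. Unset Strict Implicit. Unset Printing Implicit Defensive.
Import GRing.Theory.
Local Open Scope ring_scope.

Definition relTr (F : finFieldType) (Q : nat) (x : F) : F :=
  x + x ^+ Q + x ^+ (Q ^ 2)%N.

(* Absolute trace to F_2 of a field of order 2^n: sum_{i<n} x^(2^i). *)
Definition absTr (F : finFieldType) (n : nat) (x : F) : F :=
  \sum_(i < n) x ^+ (2 ^ i)%N.

(* (-1)^{t} for t in the prime field F_2 ⊆ F, as an integer. *)
Definition sgnF2 (F : finFieldType) (t : F) : int :=
  if t == 0 then 1 else -1.

Definition inT (F : finFieldType) (Q : nat) (x : F) : bool := relTr Q x == 0.

(* Main.v *)
Require Import Defs.
From HB Require Import structures.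
From mathcomp Require Import all_boot all_order all_algebra all_field.
From mathcomp Require Import ring zify.
Set Implicit Arguments. Unset Strict Implicit. Unset Printing Implicit Defensive.
Import GRing.Theory.
Local Open Scope ring_scope.
Section Char2.
Variable F : finFieldType.
Hypothesis ch2 : (2 \in [pchar F])%N.

Lemma frob2 (x y : F) i : (x + y) ^+ (2 ^ i) = x ^+ (2 ^ i) + y ^+ (2 ^ i).
Proof.
apply: exprDn_pchar; rewrite pnatX (pnatE _ (pcharf_prime ch2)) ch2 //.
Qed.

Lemma frob2_sum I (r : seq I) (P : pred I) (f : I -> F) i :
  (\sum_(j <- r | P j) f j) ^+ (2 ^ i) = \sum_(j <- r | P j) f j ^+ (2 ^ i).
Proof.
apply: (big_morph (fun x : F => x ^+ (2 ^ i))).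
  by move=> x y; rewrite frob2.
by rewrite expr0n expn_eq0.
Qed.

Lemma frob2_inj i : injective (fun x : F => x ^+ (2 ^ i)).
Proof.
move=> x y /= h; apply/eqP; rewrite -subr_eq0.
have : (x - y) ^+ (2 ^ i) == 0 by rewrite (oppr_pchar2 ch2) frob2 h (addrr_pchar2 ch2).
by rewrite expf_eq0 => /andP[].
Qed.

Lemma subC2 (x y : F) : x - y = x + y.
Proof. by rewrite (oppr_pchar2 ch2). Qed.

End Char2.
Lemma card_roots (R : finFieldType) (p : {poly R}) :
  p != 0 -> (#|[pred x | root p x]| < size p)%N.
Proof.
move=> p0; rewrite cardE; apply: max_poly_roots => //; last exact: enum_uniq.
by apply/allP => x; rewrite mem_enum.
Qed.

Section Main.
Variables (F : finFieldType) (e : nat).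
Hypotheses (he : (0 < e)%N) (hF : #|F| = ((2 ^ e) ^ 3)%N).
Local Notation Q := (2 ^ e)%N.
Implicit Types x y u v l : F.
Definition phi (x : F) := x ^+ Q.

Lemma ch2 : (2 \in [pchar F])%N.
Proof. by apply: (@card_finPcharP _ _ (e * 3)); rewrite // hF expnM. Qed.

Lemma phiD x y : phi (x + y) = phi x + phi y.
Proof. exact: frob2 ch2 _ _ _. Qed.
Lemma phiM x y : phi (x * y) = phi x * phi y.
Proof. exact: exprMn. Qed.
Lemma phiX x n : phi (x ^+ n) = phi x ^+ n.
Proof. exact: exprAC. Qed.
Lemma phi3 x : phi (phi (phi x)) = x.
Proof. by rewrite /phi -!exprM -[RHS](expf_card x) hF !expnS expn0 muln1 mulnA. Qed.
Lemma phi_inj : injective phi.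
Proof. exact: frob2_inj ch2 _. Qed.
Lemma phi0 : phi 0 = 0.
Proof. by rewrite /phi expr0n expn_eq0. Qed.
Lemma phi_eq0 x : (phi x == 0) = (x == 0).
Proof. by rewrite /phi expf_eq0 expn_gt0. Qed.

Lemma relTrE v : relTr Q v = v + phi v + phi (phi v).
Proof. by rewrite /relTr /phi -exprM expnS expn1. Qed.

Lemma relTr_phi v : phi (relTr Q v) = relTr Q v.
Proof. by rewrite !relTrE !phiD phi3 addrC addrA. Qed.

Lemma relTrD u v : relTr Q (u + v) = relTr Q u + relTr Q v.
Proof. rewrite !relTrE !phiD; ring. Qed.

Lemma relTrZ l v : phi l = l -> relTr Q (l * v) = l * relTr Q v.
Proof. by move=> hl; rewrite !relTrE !phiM !hl; ring. Qed.

Definition trQ (y : F) := \sum_(j < e) y ^+ (2 ^ j).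

Lemma trQD x y : trQ (x + y) = trQ x + trQ y.
Proof. by rewrite /trQ -big_split; apply: eq_bigr => j _; rewrite (frob2 ch2). Qed.

Lemma trQ0 : trQ 0 = 0.
Proof. by rewrite /trQ big1 // => j _; rewrite expr0n expn_eq0. Qed.

Lemma absTr_split v : absTr (e * 3) v = trQ (relTr Q v).
Proof.
rewrite /absTr /trQ relTrE.
have -> : (e * 3 = e + (e + e))%N by lia.
rewrite big_split_ord big_split_ord.
rewrite [RHS](eq_bigr (fun j : 'I_e => v ^+ (2 ^ j) + v ^+ (2 ^ (e + j)) + v ^+ (2 ^ (e + (e + j))))); last first.
  move=> j _; rewrite !(frob2 ch2) /phi -!exprM -!expnD //.
rewrite !big_split /= addrA //.
Qed.

Lemma Q_gt1 : (1 < Q)%N.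
Proof. by rewrite -{1}(expn0 2) ltn_exp2l. Qed.

Lemma trQ_sq y : phi y = y -> trQ y ^+ 2 = trQ y.
Proof.
move=> hy; have [e' he'] : exists e', e = e'.+1 by exists e.-1; lia.
move: hy; rewrite /phi /trQ he' => hy.
have H := frob2_sum ch2 (index_enum _) (fun _ => true) (fun j : 'I_e'.+1 => y ^+ (2^j)) 1.
rewrite expn1 in H; rewrite H.
rewrite big_ord_recr big_ord_recl /= -exprM -expnSr hy.
rewrite [in RHS]expn0 expr1 addrC; congr (_ + _); apply: eq_bigr => j _.
by rewrite -exprM -expnSr.
Qed.

Lemma trQ01 y : phi y = y -> trQ y = 0 \/ trQ y = 1.
Proof.
move=> /trQ_sq h.
have : trQ y * (trQ y - 1) == 0 by rewrite mulrBr mulr1 -expr2 h subrr.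
by rewrite mulf_eq0 subr_eq0 => /orP[] /eqP; [left|right].
Qed.

Definition K := [pred l : F | phi l == l].
Definition T := [pred x : F | relTr Q x == 0].

Lemma K_le : (#|K| <= Q)%N.
Proof.
have p0 : size (- ('X : {poly F})) = 2%N by rewrite size_polyN size_polyX.
have sp : size ('X^Q - 'X : {poly F}) = Q.+1.
  by rewrite size_polyDl ?size_polyXn // size_polyN size_polyX ltnS Q_gt1.
have := @card_roots F ('X^Q - 'X); rewrite sp -size_poly_eq0 sp ltnS => /(_ isT).
apply: leq_trans; rewrite leq_eqVlt; apply/orP; left; apply/eqP; apply: eq_card => x.
by rewrite !inE /root !hornerE subr_eq0.
Qed.

Lemma T_le : (#|T| <= Q ^ 2)%N.
Proof.
have s1 : size ('X + 'X^Q : {poly F}) = Q.+1.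
  by rewrite addrC size_polyDl size_polyXn // size_polyX ltnS Q_gt1.
have sp : size ('X^(Q ^ 2) + ('X + 'X^Q) : {poly F}) = (Q ^ 2).+1.
  rewrite size_polyDl size_polyXn // s1 ltnS expnS expn1.
  by rewrite -{1}(mul1n Q) ltn_mul2r Q_gt1 (ltnW Q_gt1).
have := @card_roots F ('X^(Q ^ 2) + ('X + 'X^Q)); rewrite sp -size_poly_eq0 sp ltnS => /(_ isT).
apply: leq_trans; rewrite leq_eqVlt; apply/orP; left; apply/eqP; apply: eq_card => x.
rewrite !inE /root /relTr !hornerE; congr (_ == 0); rewrite /=; ring.
Qed.

Lemma relTr_K v : relTr Q v \in K.
Proof. by rewrite inE relTr_phi. Qed.

Lemma fiber_le k : (#|[pred x : F | relTr Q x == k]| <= #|T|)%N.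
Proof.
case: (pickP [pred x : F | relTr Q x == k]) => [x0 hx0|h0]; last by rewrite (eq_card0 h0).
rewrite -(card_imset [pred x : F | relTr Q x == k] (addIr x0)).
apply: subset_leq_card; apply/subsetP => y /imsetP[x hx ->].
move: hx0 hx; rewrite !inE relTrD => /eqP -> /eqP ->.
by rewrite (addrr_pchar2 ch2).
Qed.

Lemma card_F_le : (#|F| <= #|K| * #|T|)%N.
Proof.
rewrite -sum1_card (partition_big (fun x : F => relTr Q x) (fun k => k \in K)) /=; last first.
  by move=> x _; apply: relTr_K.
rewrite -sum_nat_const; apply: leq_sum => k _.
rewrite (eq_bigl (fun x : F => x \in [pred x : F | relTr Q x == k])) ?sum1_card ?fiber_le //.

Qed.

Lemma card_KT : #|K| = Q /\ #|T| = (Q ^ 2)%N.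
Proof.
have h1 := card_F_le; have h2 := K_le; have h3 := T_le; rewrite hF expnS in h1.
have hQ : (0 < Q)%N by rewrite expn_gt0.
have hR : (0 < Q ^ 2)%N by rewrite !expn_gt0.
move: h1 h2 h3 hQ hR; set a := #|K|; set b := #|T|; set R := (Q ^ 2)%N; set Q' := Q.
move=> h1 h2 h3 hQ hR.
have hb : (a * b <= a * R)%N by rewrite leq_mul2l h3 orbT.
have ha : (Q' <= a)%N by rewrite -(leq_pmul2r hR) (leq_trans h1 hb).
have ea : a = Q' by apply/eqP; rewrite eqn_leq h2 ha.
split => //; apply/eqP; rewrite eqn_leq h3 -(leq_pmul2l hQ) -{2}ea //.
Qed.

Lemma card_K : #|K| = Q. Proof. by case: card_KT. Qed.
Lemma card_T : #|T| = (Q ^ 2)%N. Proof. by case: card_KT. Qed.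

Lemma trQ_nonvanish : exists2 mu, mu \in K & trQ mu != 0.
Proof.
case: (pickP [pred mu : F | (mu \in K) && (trQ mu != 0)]) => [mu /andP[h1 h2]|h].
  by exists mu.
exfalso.
have [e' he'] : exists e', e = e'.+1 by exists e.-1; lia.
pose P : {poly F} := \sum_(j < e) 'X^(2 ^ j).
have hs : size P = (2 ^ e').+1.
  rewrite /P he' big_ord_recr /= addrC size_polyDl size_polyXn //.
  rewrite ltnS; apply: leq_trans (size_sum _ _ _) _; apply/bigmax_leqP => j _.
  by rewrite size_polyXn ltn_exp2l.
have hP : P != 0 by rewrite -size_poly_eq0 hs.
have := card_roots hP; rewrite hs ltnS.
have : (#|K| <= #|[pred x | root P x]|)%N.
  apply: subset_leq_card; apply/subsetP => x hx; rewrite inE /root /P horner_sum.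
  have := h x; rewrite /= hx /= => /negbFE /eqP ht.
  suff -> : \sum_(i < e) ('X^(2 ^ i) : {poly F}).[x] = trQ x by rewrite ht.
  by apply: eq_bigr => j _; rewrite hornerXn.
rewrite card_K => h1 h2; have := leq_trans h1 h2.
by rewrite he' leq_exp2l // ltnn.
Qed.

Lemma sgn_flip y : phi y = y -> sgnF2 (trQ y + 1) = - sgnF2 (trQ y).
Proof.
move=> /trQ01 [] ->; rewrite /sgnF2.
  by rewrite add0r eqxx oner_eq0.
by rewrite (addrr_pchar2 ch2) eqxx oner_eq0 opprK.
Qed.

Lemma B0 : \sum_(mu | mu \in K) sgnF2 (trQ mu) = 0 :> int.
Proof.
case: trQ_nonvanish => mu0 hK0 ht0.
have hm : trQ mu0 = 1.
  move: hK0; rewrite inE => /eqP /trQ01 [] //; by move/eqP: ht0.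
set S := (\sum_(mu | mu \in K) _).
have : S = - S.
  have hK0' : phi mu0 = mu0 by apply/eqP.
  rewrite {1}/S (reindex_inj (addIr mu0)) /= -sumrN.
  apply: eq_big => mu.
    by rewrite !inE phiD hK0' (inj_eq (addIr mu0)).
  by rewrite inE phiD hK0' (inj_eq (addIr mu0)) => /eqP hmu; rewrite trQD hm sgn_flip.
lia.
Qed.

Local Notation d := (1 + 2 * Q + Q ^ 2)%N.

Lemma powd x : x ^+ d = x * phi x ^+ 2 * phi (phi x).
Proof.
rewrite !exprD expr1 expr0 mulr1 (_ : (Q ^ 2 = Q * Q)%N) ?exprM; last by rewrite expnS expn1.
rewrite /phi; ring.
Qed.

Lemma phiK l : l \in K -> phi l = l.
Proof. by rewrite inE => /eqP. Qed.

Lemma G_val (c x : F) :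
  \sum_(l | l \in K) sgnF2 (absTr (e * 3) (c * (l * x) ^+ d))
  = if relTr Q (c * x ^+ d) == 0 then (Q%:Z) else 0.
Proof.
have E : forall l, l \in K -> absTr (e * 3) (c * (l * x) ^+ d)
                             = trQ (l ^+ 4 * relTr Q (c * x ^+ d)).
  move=> l hl; rewrite absTr_split -relTrZ; last by rewrite phiX phiK.
  congr (trQ (relTr Q _)); rewrite exprMn (powd l) !phiK //; ring.
rewrite (eq_bigr (fun l => sgnF2 (trQ (l ^+ 4 * relTr Q (c * x ^+ d))))); last first.
  by move=> l hl; rewrite E.
case: ifP => [/eqP ->|/negbT ht].
  rewrite (eq_bigr (fun _ => 1)); last by move=> l _; rewrite mulr0 trQ0 /sgnF2 eqxx.
  by rewrite sumr_const card_K natz.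
set t := relTr Q (c * x ^+ d).
have htK : phi t = t by rewrite relTr_phi.
have h4 : forall l, l ^+ 4 = l ^+ (2 ^ 2) by [].
transitivity (\sum_(mu | mu \in K) sgnF2 (trQ mu)); last exact: B0.
rewrite [RHS](reindex_inj (h := fun l => l ^+ 4 * t)) /=.
  apply: eq_bigl => l; rewrite !inE phiM htK phiX (inj_eq (mulIf ht)) !h4.
  by rewrite (inj_eq (@frob2_inj _ ch2 2)).
by move=> l m /= /(mulIf ht); rewrite !h4 => /(frob2_inj ch2).
Qed.

Lemma key (c x : F) : x \in T ->
  relTr Q (c * x ^+ d) =
  x * phi x * phi (phi x) * (phi (c + phi c) * x + (c + phi c) * phi x).
Proof.
rewrite inE relTrE => hx.
have hz : phi (phi x) = x + phi x.
  by apply/eqP; rewrite -subr_eq0 (subC2 ch2) addrC.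
rewrite relTrE powd expr2 !phiM !phi3 !phiD hz.
set y := phi x; set c2 := phi c; set c3 := phi c2.
ring.
Qed.

Lemma relTr_w (c : F) : relTr Q (c + phi c) = 0.
Proof.
rewrite relTrE !phiD phi3.
have -> : c + phi c + (phi c + phi (phi c)) + (phi (phi c) + c)
        = (c + c) + (phi c + phi c) + (phi (phi c) + phi (phi c)) by ring.
by rewrite !(addrr_pchar2 ch2).
Qed.

Lemma N0_eq (c : F) (hc : phi c != c) x :
  (x \in T) && (relTr Q (c * x ^+ d) == 0)
  = (phi (c + phi c) * x == (c + phi c) * phi x).
Proof.
set w := c + phi c.
have hw : w != 0.
  apply: contra hc => h.
  by move: h; rewrite /w addr_eq0 (oppr_pchar2 ch2) eq_sym.
have hpw : phi w != 0 by rewrite phi_eq0.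
apply/idP/idP.
  case/andP => hT; rewrite key // !mulf_eq0 !phi_eq0 -!orbA.
  case/orP => [/eqP ->|]; first by rewrite phi0 !mulr0.
  case/orP => [/eqP ->|]; first by rewrite phi0 !mulr0.
  case/orP => [/eqP ->|]; first by rewrite phi0 !mulr0.
  by rewrite addr_eq0 (oppr_pchar2 ch2).
move=> /eqP h.
have hT : x \in T.
  have -> : x = (x / w) * w by rewrite divfK.
  rewrite inE relTrZ ?relTr_w ?mulr0 //.
  rewrite phiM /phi exprVn -/(phi x) -/(phi w).
  apply: (mulIf hpw); rewrite divfK //; apply: (mulIf hw).
  by rewrite mulrAC divfK // mulrC [x * _]mulrC h.
by rewrite hT /= key // h (addrr_pchar2 ch2) mulr0.
Qed.

Lemma card_N0 (c : F) (hc : phi c != c) :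
  #|[pred x | (x \in T) && (relTr Q (c * x ^+ d) == 0)]| = Q.
Proof.
set w := c + phi c.
have hw : w != 0.
  apply: contra hc => h.
  by move: h; rewrite /w addr_eq0 (oppr_pchar2 ch2) eq_sym.
have hpw : phi w != 0 by rewrite phi_eq0.
transitivity #|K|; last exact: card_K.
rewrite -!sum1_card.
rewrite (reindex_inj (mulIf hw)) /=; apply: eq_bigl => l.
transitivity (phi w * (l * w) == w * phi (l * w)); first exact: (N0_eq hc (l * w)).
rewrite inE.
rewrite phiM mulrCA.
have -> : w * (phi l * phi w) = (phi w * w) * phi l by ring.
rewrite mulrC (inj_eq (mulfI _)); [exact: eq_sym | exact: mulf_neq0].
Qed.

Lemma main_e (c : F) (hc : phi c != c) :
  \sum_(x | x \in T) sgnF2 (absTr (e * 3) (c * x ^+ d)) = 0.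
Proof.
pose s x := sgnF2 (absTr (e * 3) (c * x ^+ d)).
set S := \sum_(x | x \in T) _.
have hS : forall l, l \in K -> l != 0 -> \sum_(x | x \in T) s (l * x) = S.
  move=> l hl hl0; rewrite /S [RHS](reindex_inj (mulfI hl0)) /=; apply: eq_bigl => x.
  by rewrite !inE relTrZ ?phiK // mulf_eq0 (negbTE hl0).
have s0 : s 0 = 1.
  rewrite /s expr0n /= mulr0 /absTr big1 ?/sgnF2 ?eqxx // => i _.
  by rewrite expr0n expn_eq0.
have K0 : (0 : F) \in K by rewrite inE phi0.
have h1 : \sum_(l | (l \in K) && (l != 0)) \sum_(x | x \in T) s (l * x) = S *+ Q - S.
  rewrite (eq_bigr (fun _ => S)); last by move=> l /andP[]; apply: hS.
  have e1 : \sum_(l | l \in K) S = S + \sum_(l | (l \in K) && (l != 0)) S.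
    by rewrite (bigD1 0).
  rewrite (_ : S *+ Q = \sum_(l in K) S); last by rewrite sumr_const card_K.
  by rewrite e1 [S + _]addrC addrK.
have h2 : \sum_(l | (l \in K) && (l != 0)) \sum_(x | x \in T) s (l * x)
        = \sum_(x | x \in T) ((if relTr Q (c * x ^+ d) == 0 then Q%:Z else 0) - 1).
  rewrite exchange_big; apply: eq_bigr => x _.
  have s0' : sgnF2 (absTr (e * 3) (c * 0 ^+ d)) = 1 := s0.
  by rewrite -(G_val c x) [in RHS](bigD1 0) //= mul0r s0' [1 + _]addrC addrK.
have h3 : \sum_(x | x \in T) ((if relTr Q (c * x ^+ d) == 0 then Q%:Z else 0) - 1) = 0.
  rewrite sumrB sumr_const card_T -big_mkcondr.
  rewrite (eq_bigl (fun x => x \in [pred x | (x \in T) && (relTr Q (c * x ^+ d) == 0)])) //.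
  rewrite sumr_const card_N0 //.
  by rewrite -natz -mulrnA expnS expn1 subrr.
have : S *+ Q - S = 0 by rewrite -h1 h2 h3.
have hQ := Q_gt1.
rewrite -mulr_natr -{2}(mulr1 S) -mulrBr => /eqP; rewrite mulf_eq0 => /orP[/eqP //|].
rewrite subr_eq0 => /eqP hQ1; exfalso.
move: hQ1 hQ; rewrite natz; lia.
Qed.

End Main.

Theorem mainTheorem6 (F : finFieldType) (q m k : nat)
  (hq : q = (2 ^ m)%N) (hm : (0 < m)%N) (hk : (1 <= k)%N)
  (hcard : #|F| = (q ^ (3 * k))%N)
  (c : F) (hc : c ^+ (q ^ k)%N != c) :
  \sum_(x : F | inT (q ^ k)%N x)
     sgnF2 (absTr (m * (3 * k))%N (c * x ^+ (1 + 2 * q ^ k + q ^ (2 * k))%N))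
  = 0 :> int.
Proof.
have hQ : (q ^ k = 2 ^ (m * k))%N by rewrite hq expnM.
have h2k : (q ^ (2 * k) = (2 ^ (m * k)) ^ 2)%N.
  by rewrite hq -!expnM; f_equal; lia.
have habs : (m * (3 * k) = m * k * 3)%N by lia.
have he : (0 < m * k)%N by rewrite muln_gt0 hm.
have hF : #|F| = ((2 ^ (m * k)) ^ 3)%N.
  by rewrite hcard hq -!expnM; f_equal; lia.
rewrite hQ in hc.
rewrite habs h2k hQ.
rewrite (eq_bigl (fun x => x \in T F (m * k))); last by move=> x; rewrite inE.
exact: (main_e he hF hc).
Qed.
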